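(* $C_{\mathbb Z}=C^0_{\mathbb Z}=3$.
   Context: $\mathbb Z$ is regarded as the infinite path graph with vertex set $\mathbb Z$ and edges $\{j,j+1\}$, $j\in\mathbb Z$, with the graph distance $d(i,j)=|i-j|$. A measure $\mu$ is a weight function $\mu:\mathbb Z\to(0,\infty)$, with $\mu(A)=\sum_{v\in A}\mu(v)$. Closed balls are $B(x,r)=\{y:d(x,y)\le r\}$. The doubling constant of $\mu$ is $C_\mu=\sup\{\mu(B(x,2k+1))/\mu(B(x,k)): x\in \mathbb Z,\ k\in\{0,1,2,\dots\}\}$, and $\mu$ is doubling if $C_\mu<\infty$. $C_{\mathbb Z}=\inf\{C_\mu:\mu\text{ doubling}\}$; $C^0_\mu=\sup_{x}\mu(B(x,1))/\mu(x)$ and $C^0_{\mathbb Z}=\inf_\mu C^0_\mu$, the infimum over doubling measures. *)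

(* Defs.v *)
From mathcomp Require Import all_boot all_order all_algebra.
From mathcomp Require Import all_classical all_reals ereal.
Set Implicit Arguments. Unset Strict Implicit. Unset Printing Implicit Defensive.
Import Order.TTheory GRing.Theory Num.Theory.
Local Open Scope classical_set_scope.
Local Open Scope ring_scope.

(* The path graph Z has vertex set int; a measure is mu : int -> R with
   mu v > 0.  The closed ball B(x,r) = {y : |x - y| <= r} = {x-r,...,x+r},
   so mu(B(x,r)) = sum_{i=0}^{2r} mu(x - r + i). *)
Definition is_measure (R : realType) (mu : int -> R) : Prop :=
  forall v, 0 < mu v.

Definition muB (R : realType) (mu : int -> R) (x : int) (r : nat) : R :=
  \sum_(i < (2 * r).+1) mu (x - r%:Z + (i : nat)%:Z).

Definition Cmu (R : realType) (mu : int -> R) : \bar R :=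
  ereal_sup (range (fun p : int * nat =>
    (muB mu p.1 (2 * p.2).+1 / muB mu p.1 p.2)%:E)).

Definition doubling (R : realType) (mu : int -> R) : Prop :=
  is_measure mu /\ (Cmu mu < +oo)%E.

Definition CZ (R : realType) : \bar R :=
  ereal_inf [set Cmu mu | mu in [set mu : int -> R | doubling mu]].

Definition C0mu (R : realType) (mu : int -> R) : \bar R :=
  ereal_sup (range (fun x : int => (muB mu x 1 / mu x)%:E)).

Definition C0Z (R : realType) : \bar R :=
  ereal_inf [set C0mu mu | mu in [set mu : int -> R | doubling mu]].

(* Main.v *)
Require Import Defs.
From mathcomp Require Import all_boot all_order all_algebra.
From mathcomp Require Import all_classical all_reals ereal.
From mathcomp Require Import zify lra.
Set Implicit Arguments. Unset Strict Implicit. Unset Printing Implicit Defensive.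
Import Order.TTheory GRing.Theory Num.Theory.
Local Open Scope ring_scope.

Lemma concave_half (R : realType) (f : nat -> R) :
  (forall n, 0 < f n) -> (forall n, f n.+2 + f n <= 2 * f n.+1) ->
  f 1%N < f 0%N -> False.
Proof.
move=> pos conc lt10.
set e := f 0%N - f 1%N.
have e0 : 0 < e by rewrite /e; lra.
have hd : forall n, f n.+1 - f n <= - e.
  elim=> [|n IH]; first by rewrite /e; lra.
  have := conc n; lra.
have ha : forall n : nat, f n <= f 0%N - n%:R * e.
  elim=> [|n IH]; first by rewrite mulr0n mul0r subr0.
  have := hd n; rewrite -natr1 mulrDl mul1r; lra.
have b0 : 0 <= f 0%N / e by rewrite divr_ge0 // ltW.
have := archi_boundP b0.
set N := Num.bound _ => hN.
have : f 0%N < N%:R * e by rewrite -ltr_pdivrMr.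
have := ha N; have := pos N; lra.
Qed.

Lemma no_sub3 (R : realType) (a : int -> R) (c : R) :
  (forall x, 0 < a x) -> c < 3 ->
  (forall x, a (x - 1) + a x + a (x + 1) <= c * a x) -> False.
Proof.
move=> pos c3 H.
have conc : forall x, a (x - 1) + a (x + 1) <= 2 * a x.
  move=> x; have := H x; have := pos x; nra.
have [lt10|ge10] := ltP (a 1) (a 0).
  apply: (@concave_half R (fun n : nat => a n%:Z)) => //.
  move=> n; have := conc (n.+1)%:Z.
  have -> : (n.+1)%:Z - 1 = n%:Z by lia.
  have -> : (n.+1)%:Z + 1 = (n.+2)%:Z by lia.
  lra.
apply: (@concave_half R (fun n : nat => a (- n%:Z))) => //.
  move=> n; have := conc (- (n.+1)%:Z).
  have -> : - (n.+1)%:Z - 1 = - (n.+2)%:Z by lia.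
  have -> : - (n.+1)%:Z + 1 = - n%:Z by lia.
  lra.
have := H 0; have := pos 0; rewrite /= !add0r oppr0; nra.
Qed.

Lemma muB0 (R : realType) (mu : int -> R) x : muB mu x 0 = mu x.
Proof. by rewrite /muB big_ord_recl big_ord0 addr0 subr0 addr0. Qed.

Lemma muB1 (R : realType) (mu : int -> R) x :
  muB mu x 1 = mu (x - 1) + mu x + mu (x + 1).
Proof.
rewrite /muB !big_ord_recl big_ord0 addr0 /= addr0.
rewrite /bump /=.
have -> : x - 1 + 1 = x by lia.
have -> : x - 1 + 2%:Z = x + 1 by lia.
by rewrite addrA.
Qed.

Lemma ge3 (R : realType) (mu : int -> R) (S : \bar R) :
  is_measure mu -> (forall x, ((muB mu x 1 / mu x)%:E <= S)%E) ->
  ((3%:R : R)%:E <= S)%E.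
Proof.
move=> pos H; rewrite leNgt; apply/negP => Hlt.
move: Hlt H; case: S => [r | |] //.
- rewrite lte_fin => r3 H.
  apply: (@no_sub3 R mu r pos r3) => x.
  have := H x; rewrite lee_fin muB1 ler_pdivrMr //.
- by move=> _ /(_ 0); rewrite leeNy_eq.
Qed.

Lemma ge3_C0 (R : realType) (mu : int -> R) : is_measure mu ->
  ((3%:R : R)%:E <= C0mu mu)%E.
Proof.
move=> pos; apply: (ge3 pos) => x; apply: ereal_sup_ubound; by exists x.
Qed.

Lemma ge3_C (R : realType) (mu : int -> R) : is_measure mu ->
  ((3%:R : R)%:E <= Cmu mu)%E.
Proof.
move=> pos; apply: (ge3 pos) => x; apply: ereal_sup_ubound; exists (x, 0%N) => //=.
by rewrite muB0.
Qed.

Lemma muB_one (R : realType) x r : muB (fun _ : int => (1%R : R)) x r = ((2 * r).+1)%:R.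
Proof. by rewrite /muB sumr_const card_ord. Qed.

Lemma Cmu_one (R : realType) : (Cmu (fun _ : int => (1%R : R)) <= (3%:R : R)%:E)%E.
Proof.
apply: ge_ereal_sup => _ [[x k] _ <-] /=.
rewrite !muB_one lee_fin ler_pdivrMr ?ltr0n // -natrM ler_nat.
lia.
Qed.

Lemma C0mu_le (R : realType) (mu : int -> R) : (C0mu mu <= Cmu mu)%E.
Proof.
apply: ge_ereal_sup => _ [x _ <-]; apply: ereal_sup_ubound; exists (x, 0%N) => //=.
by rewrite muB0.
Qed.

Lemma one_doubling (R : realType) : doubling (fun _ : int => (1%R : R)).
Proof.
split; first by move=> v; exact: ltr01.
by apply: (le_lt_trans (Cmu_one R)); exact: ltry.
Qed.

Theorem theorem4p2 (R : realType) :
  CZ R = (3%:R : R)%:E /\ C0Z R = (3%:R : R)%:E.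
Proof.
split; apply/eqP; rewrite eq_le; apply/andP; split.
- apply: ge_ereal_inf; exists (Cmu (fun _ : int => (1%R : R)));
    [by exists (fun _ => 1%R) => //; exact: one_doubling | exact: Cmu_one].
- apply: le_ereal_inf_tmp => _ [mu [pos _] <-]; exact: ge3_C.
- apply: ge_ereal_inf; exists (C0mu (fun _ : int => (1%R : R)));
    [by exists (fun _ => 1%R) => //; exact: one_doubling |].
  exact: le_trans (C0mu_le _) (Cmu_one R).
- apply: le_ereal_inf_tmp => _ [mu [pos _] <-]; exact: ge3_C0.
Qed.
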